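(* Assume that the ALS parameter sequence $(\mathbf p_k)_{k\in\mathbb N}$ is bounded. If some accumulation point $\bar v$ of the sequence $(v_k)_{k\in\mathbb N}$ is isolated in the (nonempty) set of accumulation points of $(v_k)_{k\in\mathbb N}$, then $v_k\to\bar v$ as $k\to\infty$.
   Context: Let $d\ge 1$ and $m_1,\dots,m_d$ be positive integers, $N=\prod_{\nu=1}^d m_\nu$, and $\mathcal V=\bigotimes_{\nu=1}^d\mathbb R^{m_\nu}\cong\mathbb R^N$ with the Euclidean inner product. Let $A\in\mathbb R^{N\times N}$ be symmetric positive definite and $b\in\mathcal V\setminus\{0\}$; put $f(v)=\frac{1}{\|b\|^2}\big(\tfrac12\langle Av,v\rangle-\langle b,v\rangle\big)$. A tensor format representation consists of an integer $L\ge d$, finite-dimensional real inner product spaces $P_1,\dots,P_L$, the parameter space $P=P_1\times\dots\times P_L$ (with product norm), and a multilinear map $U:P\to\mathcal V$; put $F=f\circ U$. For $\mathbf p=(p_1,\dots,p_L)\in P$ and $\mu\in\{1,\dots,L\}$ let $W_{\mu,\mathbf p^{[\mu]}}:P_\mu\to\mathcal V$ be the linear map $q\mapsto U(p_1,\dots,p_{\mu-1},q,p_{\mu+1},\dots,p_L)$ (depending only on $\mathbf p^{[\mu]}=(p_1,\dots,p_{\mu-1},p_{\mu+1},\dots,p_L)$). Linear maps are identified with matrices w.r.t. orthonormal bases; $X^T$ is the transpose, $X^+$ the Moore–Penrose pseudoinverse. ALS: choose $\mathbf p_1=(p_1^1,\dots,p_L^1)\in P$. For $k=1,2,\dots$ and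 $\mu=1,\dots,L$ in this order let $W_{k,\mu}:=W_{\mu,(p_1^{k+1},\dots,p_{\mu-1}^{k+1},p_{\mu+1}^k,\dots,p_L^k)}$ and $p_\mu^{k+1}:=(W_{k,\mu}^TAW_{k,\mu})^+W_{k,\mu}^Tb$ (the minimum-norm minimiser of $q\mapsto F(p_1^{k+1},\dots,p_{\mu-1}^{k+1},q,p_{\mu+1}^k,\dots,p_L^k)$). Put $\mathbf p_k=(p_1^k,\dots,p_L^k)$ and $v_k=U(\mathbf p_k)$. *)

(* Defs.v *)
From HB Require Import structures.
From mathcomp Require Import all_boot all_order all_algebra.
From mathcomp Require Import reals.
From Stdlib Require Import ClassicalEpsilon.
Set Implicit Arguments. Unset Strict Implicit. Unset Printing Implicit Defensive.
Import Order.TTheory GRing.Theory Num.Theory.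
Local Open Scope ring_scope.

Section ALS.
Variable R : realType.

Definition enorm (N : nat) (x : 'cV[R]_N) : R := Num.sqrt (\sum_(i < N) x i 0 ^+ 2).

(* Moore--Penrose pseudoinverse: the (unique) matrix satisfying the four
   Penrose equations (it always exists; chosen by classical choice). *)
Definition is_pinv (m n : nat) (M : 'M[R]_(m, n)) (X : 'M[R]_(n, m)) : Prop :=
  [/\ M *m X *m M = M, X *m M *m X = X, (M *m X)^T = M *m X & (X *m M)^T = X *m M].

Definition pinv (m n : nat) (M : 'M[R]_(m, n)) : 'M[R]_(n, m) :=
  epsilon (inhabits 0) (is_pinv M).

Definition symmetric_pd (N : nat) (A : 'M[R]_N) : Prop :=
  A^T = A /\ forall x : 'cV[R]_N, x != 0 -> 0 < ((x^T *m A *m x) 0 0).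

(* parameter space P = P_1 x ... x P_L, with P_mu identified with R^(n mu)
   via an orthonormal basis *)
Definition params (L : nat) (n : 'I_L -> nat) := forall mu : 'I_L, 'cV[R]_(n mu).

Definition multilinear (L N : nat) (n : 'I_L -> nat) (U : params n -> 'cV[R]_N) : Prop :=
  forall (p : params n) (mu : 'I_L) (a : R) (q1 q2 : 'cV[R]_(n mu)),
    U (dfwith p (a *: q1 + q2)) = a *: U (dfwith p q1) + U (dfwith p q2).

(* matrix of the linear map W_{mu, p^[mu]} : q |-> U(p_1,..,q,..,p_L)
   w.r.t. the standard (orthonormal) bases *)
Definition Wmat (L N : nat) (n : 'I_L -> nat) (U : params n -> 'cV[R]_N)
  (p : params n) (mu : 'I_L) : 'M[R]_(N, n mu) :=
  \matrix_(i < N, j < n mu) U (dfwith p (delta_mx j 0 : 'cV[R]_(n mu))) i 0.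

Definition als_update (L N : nat) (n : 'I_L -> nat) (U : params n -> 'cV[R]_N)
  (A : 'M[R]_N) (b : 'cV[R]_N) (p : params n) (mu : 'I_L) : params n :=
  let W := Wmat U p mu in
  dfwith p (pinv (W^T *m A *m W) *m W^T *m b).

Definition als_sweep (L N : nat) (n : 'I_L -> nat) (U : params n -> 'cV[R]_N)
  (A : 'M[R]_N) (b : 'cV[R]_N) (p : params n) : params n :=
  foldl (als_update U A b) p (enum 'I_L).

(* als_seq ... p1 k = p_{k+1} (index shifted by one w.r.t. the paper) *)
Definition als_seq (L N : nat) (n : 'I_L -> nat) (U : params n -> 'cV[R]_N)
  (A : 'M[R]_N) (b : 'cV[R]_N) (p1 : params n) (k : nat) : params n :=
  iter k (als_sweep U A b) p1.

Definition accumulation_point (N : nat) (v : nat -> 'cV[R]_N) (w : 'cV[R]_N) : Prop :=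
  forall eps : R, 0 < eps -> forall K : nat, exists2 k : nat, (K <= k)%N & enorm (v k - w) < eps.

Definition converges_to (N : nat) (v : nat -> 'cV[R]_N) (w : 'cV[R]_N) : Prop :=
  forall eps : R, 0 < eps -> exists K : nat, forall k : nat, (K <= k)%N -> enorm (v k - w) < eps.

End ALS.

(* Main.v *)
From HB Require Import structures.
From mathcomp Require Import all_boot all_order all_algebra.
From mathcomp Require Import reals ring lra.
From mathcomp Require Import boolp classical_sets topology normedtype.
Require Import Defs.
From Stdlib Require Import FunctionalExtensionality Classical_Prop.
Import Order.TTheory GRing.Theory Num.Theory.
Import numFieldNormedType.Exports.
Set Implicit Arguments. Unset Strict Implicit. Unset Printing Implicit Defensive.
Local Open Scope ring_scope.

Section LA.
Variable R : realType.

Lemma rowsq_eq0 n (y : 'rV[R]_n) : (y *m y^T) 0 0 = 0 -> y = 0.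
Proof.
rewrite mxE => H.
have H0 : forall j, (true : bool) -> 0 <= y 0 j * y^T j 0.
  by move=> j _; rewrite mxE -expr2 sqr_ge0.
have := psumr_eq0P H0 H => Hj.
apply/rowP => j; rewrite mxE; apply/eqP; rewrite -sqrf_eq0 expr2.
by apply/eqP; have := Hj j isT; rewrite mxE.
Qed.

Lemma kerfree m n (K : 'M[R]_(m, n)) :
  (forall u : 'rV_m, u *m K = 0 -> u = 0) -> row_free K.
Proof.
move=> H; rewrite -kermx_eq0; apply/eqP/row_matrixP => i; rewrite row0.
by apply: H; rewrite -row_mul mulmx_ker row0.
Qed.

Lemma gram_unit r n (C : 'M[R]_(r, n)) : row_free C -> C *m C^T \in unitmx.
Proof.
move=> fC; rewrite -row_free_unit; apply: kerfree => u Hu.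
have : (u *m C) *m (u *m C)^T = 0 by rewrite trmx_mul mulmxA -(mulmxA u) Hu mul0mx.
move=> H; have /rowsq_eq0 H2 : ((u *m C) *m (u *m C)^T) 0 0 = 0 by rewrite H mxE.
by apply/eqP; rewrite -(mulmx_free_eq0 _ fC) H2.
Qed.

Lemma pinv_fact m r n (B : 'M[R]_(m, r)) (C : 'M[R]_(r, n)) :
  B^T *m B \in unitmx -> C *m C^T \in unitmx ->
  is_pinv (B *m C) (C^T *m invmx (C *m C^T) *m invmx (B^T *m B) *m B^T).
Proof.
move=> uB uC.
set GB := invmx (B^T *m B); set GC := invmx (C *m C^T).
have sGB : GB^T = GB by rewrite /GB trmx_inv trmx_mul trmxK.
have sGC : GC^T = GC by rewrite /GC trmx_inv trmx_mul trmxK.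
have eB : GB *m (B^T *m B) = 1%:M by rewrite mulVmx.
have eC : (C *m C^T) *m GC = 1%:M by rewrite mulmxV.
have eB' : forall p (X : 'M_(r, p)), GB *m (B^T *m (B *m X)) = X.
  by move=> p X; rewrite (mulmxA B^T) (mulmxA GB) eB mul1mx.
have eC' : forall p (X : 'M_(r, p)), C *m (C^T *m (GC *m X)) = X.
  by move=> p X; rewrite (mulmxA C^T) (mulmxA C) (mulmxA C) eC mul1mx.
split.
- by rewrite -!mulmxA eC' eB'.
- by rewrite -!mulmxA eB' eC'.
- rewrite -!mulmxA eC' !trmx_mul !trmxK sGB; by rewrite !mulmxA.
- rewrite -!mulmxA eB' !trmx_mul !trmxK sGC; by rewrite !mulmxA.
Qed.

Lemma pinv_exists m n (M : 'M[R]_(m, n)) : exists X, is_pinv M X.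
Proof.
set B := col_base M; set C := row_base M.
have fBt : row_free B^T by rewrite /row_free mxrank_tr; exact: col_base_full.
have fC : row_free C by exact: row_base_free.
have uB : B^T *m B \in unitmx by have := gram_unit fBt; rewrite trmxK.
have uC := gram_unit fC.
have := pinv_fact uB uC; rewrite /B /C mulmx_base => H; eexists; exact: H.
Qed.

Lemma pinvP m n (M : 'M[R]_(m, n)) : is_pinv M (pinv M).
Proof.
rewrite /pinv; case: (pinv_exists M) => X HX.
exact: (ClassicalEpsilon.epsilon_spec (inhabits 0) (is_pinv M) (ex_intro _ X HX)).
Qed.

Lemma pd_eq0 N (A : 'M[R]_N) (z : 'cV[R]_N) : symmetric_pd A ->
  (z^T *m A *m z) 0 0 = 0 -> z = 0.
Proof.
move=> [_ PD] H; apply/eqP; apply/negPn/negP => nz.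
by have := PD z nz; rewrite H ltxx.
Qed.

Lemma normal_eq N n (A : 'M[R]_N) (W : 'M[R]_(N, n)) (b : 'cV[R]_N) :
  symmetric_pd A ->
  W^T *m A *m W *m (pinv (W^T *m A *m W) *m W^T *m b) = W^T *m b.
Proof.
move=> sA.
set M := W^T *m A *m W; set X := pinv M.
have [h1 _ _ _] := pinvP M; rewrite -/X in h1.
set Q := 1%:M - M *m X.
have QM : Q *m M = 0 by rewrite /Q mulmxBl mul1mx h1 subrr.
set Z := W *m Q^T.
have ZAZ : Z^T *m A *m Z = 0.
  have -> : Z^T *m A *m Z = Q *m M *m Q^T by rewrite /Z trmx_mul trmxK /M !mulmxA.
  by rewrite QM !mul0mx.
have Z0 : Z = 0.
  apply/matrixP => i j.
  have := @pd_eq0 _ A (col j Z) sA.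
  have -> : (col j Z)^T *m A *m col j Z =
    (delta_mx j 0 : 'cV_n)^T *m (Z^T *m A *m Z) *m delta_mx j 0.
    by rewrite colE trmx_mul !mulmxA.
  rewrite ZAZ mulmx0 mul0mx mxE.
  move=> /(_ erefl) H.
  have := congr1 (fun M : 'cV[R]_N => M i 0) H.
  by rewrite !mxE.
have QW : Q *m W^T = 0 by rewrite -[Q]trmxK -trmx_mul -/Z Z0 trmx0.
have PW : M *m X *m W^T = W^T.
  apply/eqP; rewrite -subr_eq0 -oppr_eq0 opprB; apply/eqP.
  by rewrite -{1}[W^T]mul1mx -mulmxBl -/Q QW.
by rewrite !mulmxA PW.
Qed.
End LA.
Section UP.
Variables (R : realType) (L N : nat) (n : 'I_L -> nat).
Variable U : params R n -> 'cV[R]_N.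
Hypothesis mlU : multilinear U.

Definition dfw (p : params R n) (mu : 'I_L) (q : 'cV[R]_(n mu)) : params R n :=
  @dfwith _ (fun mu0 => 'cV[R]_(n mu0)) p mu q.
Arguments dfw : clear implicits.

Lemma U0 p mu : U (dfw p mu 0) = 0.
Proof.
have H := @mlU p mu 1 0 0; rewrite scaler0 addr0 scale1r in H.
have := congr1 (fun t => t - U (dfw p mu 0)) H.
by rewrite subrr addrK.
Qed.

Lemma UZ p mu a (q : 'cV[R]_(n mu)) : U (dfw p mu (a *: q)) = a *: U (dfw p mu q).
Proof. by have := @mlU p mu a q 0; rewrite !addr0 U0 addr0. Qed.

Lemma UD p mu (q1 q2 : 'cV[R]_(n mu)) :
  U (dfw p mu (q1 + q2)) = U (dfw p mu q1) + U (dfw p mu q2).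
Proof. by have := @mlU p mu 1 q1 q2; rewrite !scale1r. Qed.

Lemma U_W p mu (q : 'cV[R]_(n mu)) : U (dfw p mu q) = Wmat U p mu *m q.
Proof.
have Hq : q = \sum_(i < n mu) q i 0 *: (delta_mx i 0 : 'cV[R]_(n mu)).
  rewrite {1}[q]matrix_sum_delta; apply: eq_bigr => i _; by rewrite big_ord1.
have -> : U (dfw p mu q) =
    \sum_(i < n mu) q i 0 *: U (dfw p mu (delta_mx i 0 : 'cV[R]_(n mu))).
  rewrite {1}Hq.
  apply: (big_ind2 (fun x y => U (dfw p mu x) = y)).
  - exact: U0.
  - by move=> x1 x2 y1 y2 <- <-; rewrite UD.
  - by move=> i _; rewrite UZ.
apply/matrixP => i j; rewrite (ord1 j) summxE !mxE.
by apply: eq_bigr => k _; rewrite !mxE mulrC.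
Qed.

Lemma dfw_self p mu : dfw p mu (p mu) = p.
Proof.
apply: functional_extensionality_dep => j; rewrite /dfw.
case: (eqVneq mu j) => [<-|ne]; first by rewrite dfwith_in.
by rewrite dfwith_out.
Qed.

Lemma U_self p mu : U p = Wmat U p mu *m p mu.
Proof. by rewrite -U_W dfw_self. Qed.

End UP.
Section EN.
Variables (R : realType) (N : nat) (A : 'M[R]_N).

Definition bf (u w : 'cV[R]_N) : R := (u^T *m A *m w) 0 0.
Definition Sq (z : 'cV[R]_N) : R := \sum_(i < N) z i 0 ^+ 2.

Lemma bfDl u1 u2 w : bf (u1 + u2) w = bf u1 w + bf u2 w.
Proof. by rewrite /bf linearD /= !mulmxDl mxE. Qed.
Lemma bfDr u w1 w2 : bf u (w1 + w2) = bf u w1 + bf u w2.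
Proof. by rewrite /bf mulmxDr mxE. Qed.
Lemma bfZl a u w : bf (a *: u) w = a * bf u w.
Proof. by rewrite /bf linearZ /= -!scalemxAl mxE. Qed.
Lemma bfZr a u w : bf u (a *: w) = a * bf u w.
Proof. by rewrite /bf -scalemxAr mxE. Qed.
Lemma bfNl u w : bf (- u) w = - bf u w.
Proof. by rewrite -scaleN1r bfZl mulN1r. Qed.
Lemma bfNr u w : bf u (- w) = - bf u w.
Proof. by rewrite -scaleN1r bfZr mulN1r. Qed.
Lemma bfBl u1 u2 w : bf (u1 - u2) w = bf u1 w - bf u2 w.
Proof. by rewrite bfDl bfNl. Qed.
Lemma bfBr u w1 w2 : bf u (w1 - w2) = bf u w1 - bf u w2.
Proof. by rewrite bfDr bfNr. Qed.
Lemma bf_sym u w : A^T = A -> bf u w = bf w u.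
Proof.
move=> sA; rewrite /bf.
have -> : (u^T *m A *m w) 0 0 = ((u^T *m A *m w)^T) 0 0 by rewrite [RHS]mxE.
by rewrite !trmx_mul trmxK sA mulmxA.
Qed.
Lemma bf0r u : bf u 0 = 0.
Proof. by rewrite /bf mulmx0 mxE. Qed.

Hypothesis sA : symmetric_pd A.

Lemma bf_ge0 u : 0 <= bf u u.
Proof.
case: (eqVneq u 0) => [->|nz]; first by rewrite bf0r.
by apply: ltW; case: sA => _ H; exact: H.
Qed.

Lemma bf_eq0 u : bf u u = 0 -> u = 0.
Proof.
move=> H; apply/eqP; apply/negPn/negP => nz.
by case: sA => _ /(_ u nz); rewrite -/(bf u u) H ltxx.
Qed.

Lemma CS u w : bf u w ^+ 2 <= bf u u * bf w w.
Proof.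
have sym : A^T = A by case: sA.
case: (eqVneq w 0) => [->|nz]; first by rewrite bf0r expr0n /= bf0r mulr0.
have c0 : 0 < bf w w by case: sA => _ H; exact: H.
set s := bf u w; set a := bf u u; set c := bf w w.
have := bf_ge0 (u - (s / c) *: w).
rewrite bfBl !bfBr !bfZl !bfZr -/a -/c -/s (bf_sym w u sym) -/s => H.
have e : a - s / c * s - (s / c * s - s / c * (s / c * c)) = a - s ^+ 2 / c.
  by field; rewrite gt_eqF.
rewrite e subr_ge0 ler_pdivrMr // in H.

Qed.


Lemma A_unit : A \in unitmx.
Proof.
rewrite -row_free_unit -kermx_eq0; apply/eqP/row_matrixP => i; rewrite row0.
set u := row i (kermx A).
have uA : u *m A = 0 by rewrite /u -row_mul mulmx_ker row0.
have : bf u^T u^T = 0 by rewrite /bf trmxK uA mul0mx mxE.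
by move/bf_eq0 => /(congr1 trmx); rewrite trmxK trmx0.
Qed.

Definition Kc : R := \sum_(j < N) \sum_(i < N) `|invmx A i j| + 1.

Lemma Kc_gt0 : 0 < Kc.
Proof. by rewrite /Kc ltr_wpDl // sumr_ge0 // => j _; rewrite sumr_ge0. Qed.

Lemma Sq_le (z : 'cV[R]_N) (i : 'I_N) : z i 0 ^+ 2 <= Sq z.
Proof.
rewrite /Sq (bigD1 i) //= lerDl sumr_ge0 // => j _; exact: sqr_ge0.
Qed.

Lemma Sq_ge0 (z : 'cV[R]_N) : 0 <= Sq z.
Proof. by rewrite sumr_ge0 // => j _; exact: sqr_ge0. Qed.

Lemma quad_bound (B : 'M[R]_N) (z : 'cV[R]_N) :
  (z^T *m B *m z) 0 0 <= (\sum_(j < N) \sum_(i < N) `|B i j|) * Sq z.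
Proof.
rewrite mxE mulr_suml; apply: ler_sum => j _.
rewrite mxE mulr_suml mulr_suml; apply: ler_sum => i _.
rewrite mxE.
have h1 := Sq_le z i; have h2 := Sq_le z j.
have hB := ler_norm (B i j).
have e : z i 0 * B i j * z j 0 <= `|z i 0| * `|B i j| * `|z j 0|.
  by rewrite -!normrM ler_norm.
apply: (le_trans e).
rewrite (mulrC `|z i 0|) -mulrA; apply: ler_wpM2l; first exact: normr_ge0.
have hi : `|z i 0| ^+ 2 <= Sq z by rewrite real_normK ?num_real.
have hj : `|z j 0| ^+ 2 <= Sq z by rewrite real_normK ?num_real.
have := normr_ge0 (z i 0); have := normr_ge0 (z j 0).
move: hi hj; set x := `|z i 0|; set y := `|z j 0|; set S := Sq z.
move=> hi hj y0 x0; nra.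
Qed.

Lemma Sq_bound (z : 'cV[R]_N) : Sq z <= Kc * bf z z.
Proof.
have sym : A^T = A by case: sA.
set B := invmx A.
have uA := A_unit.
have sB : B^T = B by rewrite /B trmx_inv sym.
have eS : Sq z = bf z (B *m z).
  rewrite /bf /B mulmxA -(mulmxA z^T) mulmxV // mulmx1 mxE /Sq.
  by apply: eq_bigr => i _; rewrite mxE expr2.
have ew : bf (B *m z) (B *m z) = (z^T *m B *m z) 0 0.
  rewrite /bf trmx_mul sB -!mulmxA (mulmxA A) /B mulmxV // mul1mx.
  by rewrite !mulmxA.
have h := CS z (B *m z); rewrite -eS ew in h.
have hq := quad_bound B z.
have q0 := bf_ge0 z.
have S0 := Sq_ge0 z.
have Kb0 : 0 <= \sum_(j < N) \sum_(i < N) `|B i j|.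
  by rewrite sumr_ge0 // => j _; rewrite sumr_ge0.
rewrite /Kc -/B.
move: h hq q0 S0 Kb0.
set S := Sq z; set q := bf z z; set Kb := \sum_(j < N) _; set T := (_ 0 0).
move=> h hq q0 S0 Kb0.
have H2 : S ^+ 2 <= q * (Kb * S) by apply: (le_trans h); apply: ler_wpM2l.
case: (eqVneq S 0) => [->|Sn0]; first by rewrite mulr_ge0 // addr_ge0.
have Sp : 0 < S by rewrite lt_def Sn0.
have H3 : S <= q * Kb.
  rewrite -(ler_pM2r Sp); move: H2; rewrite expr2 mulrA; exact.
nra.
Qed.

Lemma step_energy k (W : 'M[R]_(N, k)) (a c : 'cV[R]_k) (vs : 'cV[R]_N) :
  W^T *m A *m W *m c = W^T *m (A *m vs) ->
  bf (W *m a - vs) (W *m a - vs) =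
  bf (W *m c - vs) (W *m c - vs) + bf (W *m a - W *m c) (W *m a - W *m c).
Proof.
move=> ne.
have sym : A^T = A by case: sA.
set u := W *m a - W *m c; set w := W *m c - vs.
have -> : W *m a - vs = u + w by rewrite /u /w addrA subrK.
have uw : bf u w = 0.
  rewrite /bf /u -mulmxBr trmx_mul -!mulmxA.
  have -> : A *m w = A *m W *m c - A *m vs by rewrite /w mulmxBr mulmxA.
  by rewrite mulmxBr !mulmxA ne -mulmxA subrr mulmx0 mxE.
rewrite bfDl (bfDr u u w) (bfDr w u w) uw (bf_sym w u sym) uw addr0 add0r addrC.
by [].
Qed.

End EN.
Local Open Scope classical_set_scope.
Lemma mx_entry_le (R : realType) m n (M : 'M[R]_(m, n)) i j : `|M i j| <= `|M|.
Proof.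
change `|M| with (mx_norm M); rewrite mx_normrE.
exact: (@le_bigmax _ _ _ 0 (fun ij : 'I_m * 'I_n => `|M ij.1 ij.2|) (i, j)).
Qed.

Lemma mx_norm_le (R : realType) m n (M : 'M[R]_(m, n)) r : 0 <= r ->
  (forall i j, `|M i j| <= r) -> `|M| <= r.
Proof.
move=> r0 H; change `|M| with (mx_norm M); rewrite mx_normrE.
by apply: bigmax_le => // -[i j] _; exact: H.
Qed.

Lemma BW (R : realType) (N : nat) (c : 'cV[R]_N) (r : R) (w : nat -> 'cV[R]_N) :
 0 < r -> (forall k i, `|w k i 0 - c i 0| <= r) ->
 exists z : 'cV[R]_N, (forall i, `|z i 0 - c i 0| <= r) /\
   forall e, 0 < e -> forall K, exists2 k, (K <= k)%N &
     forall i, `|w k i 0 - z i 0| < e.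
Proof.
move=> r0 Hw.
pose wr k := (w k)^T.
pose A := closed_ball_ (fun x : 'rV[R]_N => `|x|) c^T r.
have cA : compact A.
  apply: bounded_closed_compact; last exact: closed_closed_ball_.
  exists (`|c^T| + r); split; first by rewrite num_real.
  move=> M HM x Ax /=.
  have -> : x = c^T - (c^T - x) by rewrite opprB addrC subrK.
  apply: (le_trans (ler_normB _ _)); apply: ltW; apply: le_lt_trans HM.
  by rewrite lerD2l.
pose F := (wr @ \oo).
have FA : F A.
  apply: filterS (nbhs_infty_ge 0%N) => k _; rewrite /A /closed_ball_ /=.
  apply: mx_norm_le; first exact: ltW.
  by move=> i j; rewrite !mxE (ord1 i) distrC; exact: Hw.
have [z [Az clz]] := cA F _ FA.
exists z^T; split.
  move=> i; have := @mx_entry_le _ _ _ (c^T - z) 0 i.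
  by rewrite !mxE distrC => H; exact: le_trans H Az.
move=> e e0 K.
pose A' := [set y | exists2 k, (K <= k)%N & y = wr k].
have FA' : F A'.
  by apply: filterS (nbhs_infty_ge K) => k Kk; exists k.
have [y [[k Kk ->] By]] := clz A' (ball z e) FA' (nbhsx_ballx z e e0).
exists k => // i.
move: By; rewrite -ball_normE /ball_ /= => H.
have := @mx_entry_le _ _ _ (z - wr k) 0 i.
by rewrite !mxE distrC => H1; exact: le_lt_trans H1 H.
Qed.
Local Close Scope classical_set_scope.

Section SW.
Variables (R : realType) (L N : nat) (n : 'I_L -> nat).
Variable U : params R n -> 'cV[R]_N.
Hypothesis mlU : multilinear U.
Variables (A : 'M[R]_N) (b : 'cV[R]_N).
Hypothesis sA : symmetric_pd A.

Definition vs : 'cV[R]_N := invmx A *m b.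
Lemma hvs : A *m vs = b.
Proof. by rewrite /vs mulKVmx // A_unit. Qed.

Definition hE (v : 'cV[R]_N) : R := bf A (v - vs) (v - vs).

Lemma hE_ge0 v : 0 <= hE v.
Proof. exact: bf_ge0. Qed.

Lemma upd_energy p mu :
  hE (U p) = hE (U (als_update U A b p mu)) +
    bf A (U p - U (als_update U A b p mu)) (U p - U (als_update U A b p mu)).
Proof.
set W := Wmat U p mu.
set c := pinv (W^T *m A *m W) *m W^T *m b.
have e1 : U (als_update U A b p mu) = W *m c.
  by rewrite -(U_W mlU); reflexivity.
have e2 : U p = W *m p mu by exact: U_self.
rewrite e1 e2 /hE; apply: step_energy => //.
by rewrite hvs; exact: normal_eq.
Qed.

Lemma Sq_opp (x : 'cV[R]_N) : Sq (- x) = Sq x.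
Proof. by apply: eq_bigr => i _; rewrite mxE sqrrN. Qed.

Lemma Sq0 : Sq (0 : 'cV[R]_N) = 0.
Proof. by rewrite /Sq big1 // => i _; rewrite mxE expr0n. Qed.

Lemma Sq_add (x y : 'cV[R]_N) : Sq (x + y) <= 2 * Sq x + 2 * Sq y.
Proof.
rewrite /Sq !mulr_sumr -big_split /=; apply: ler_sum => i _; rewrite mxE.
have := sqr_ge0 (x i 0 - y i 0); nra.
Qed.

Lemma upd_bound p mu :
  Sq (U (als_update U A b p mu) - U p) <=
    Kc A * (hE (U p) - hE (U (als_update U A b p mu))).
Proof.
rewrite (upd_energy p mu) addrAC subrr add0r.
by rewrite -Sq_opp opprB; exact: Sq_bound.
Qed.

Lemma upd_dec p mu : hE (U (als_update U A b p mu)) <= hE (U p).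
Proof. by rewrite (upd_energy p mu) lerDl bf_ge0. Qed.

Lemma sweep_lemma s p :
  hE (U (foldl (als_update U A b) p s)) <= hE (U p) /\
  Sq (U (foldl (als_update U A b) p s) - U p) <=
    (4 : R) ^+ size s * Kc A * (hE (U p) - hE (U (foldl (als_update U A b) p s))).
Proof.
elim: s p => [|mu s IH] p /=.
  by rewrite subrr Sq0 subrr mulr0.
have [IH1 IH2] := IH (als_update U A b p mu).
set F := U (foldl _ _ s) in IH1 IH2 *; set P' := U (als_update U A b p mu) in IH1 IH2 *.
have d1 := upd_dec p mu; have d2 := upd_bound p mu; rewrite -/P' in d1 d2.
split; first exact: le_trans IH1 d1.
have -> : F - U p = (F - P') + (P' - U p) by rewrite addrA subrK.
apply: (le_trans (Sq_add _ _)).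
have K0 := Kc_gt0 A.
have T1 : 1 <= (4 : R) ^+ size s by apply: exprn_ege1; rewrite ler1n.
set T := (4 : R) ^+ size s in IH2 T1 *.
rewrite exprS -/T.
set X := Kc A * (hE P' - hE F).
set Y := Kc A * (hE (U p) - hE P').
have X0 : 0 <= X by apply: mulr_ge0; [exact: ltW | rewrite subr_ge0].
have Y0 : 0 <= Y by apply: mulr_ge0; [exact: ltW | rewrite subr_ge0].
have TX : 0 <= T * X by rewrite mulr_ge0 // (le_trans ler01).
have TY : Y <= T * Y by rewrite ler_peMl.
have e : 4 * T * Kc A * (hE (U p) - hE F) = 4 * (T * X) + 4 * (T * Y).
  by rewrite /X /Y; ring.
rewrite e.
have IH2' : Sq (F - P') <= T * X by rewrite /X mulrA.
have d2' : Sq (P' - U p) <= Y by [].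
lra.
Qed.

End SW.

Section FIN.
Variable R : realType.

Lemma decay (h : nat -> R) : (forall k, h k.+1 <= h k) -> (forall k, 0 <= h k) ->
  forall eta, 0 < eta -> exists K, forall k, (K <= k)%N -> h k - h k.+1 < eta.
Proof.
move=> dec pos eta eta0.
have mono : forall i d, h (i + d)%N <= h i.
  move=> i; elim=> [|d IH]; first by rewrite addn0.
  by rewrite addnS; exact: le_trans (dec _) IH.
apply: Classical_Prop.NNPP => Hn.
have H : forall K, exists k, (K <= k)%N /\ eta <= h k - h k.+1.
  move=> K; apply: Classical_Prop.NNPP => H'; apply: Hn; exists K => k Kk.
  rewrite ltNge; apply/negP => He; apply: H'; by exists k.
have Hm : forall m : nat, exists k, h k <= h 0%N - m%:R * eta.
  elim => [|m [k Hk]]; first by exists 0%N; rewrite mul0r subr0.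
  have [k' [kk' He]] := H k; exists k'.+1.
  have := mono k (k' - k)%N; rewrite subnKC // => hk.
  rewrite -natr1 mulrDl mul1r; lra.
have h00 := pos 0%N.
have [k Hk] := Hm (Num.bound (h 0%N / eta)).
have := archi_boundP (divr_ge0 h00 (ltW eta0)).
rewrite ltr_pdivrMr // => Hb.
have := pos k; lra.
Qed.

Lemma enorm_lt N (x : 'cV[R]_N) e : 0 < e -> (enorm x < e) = (Sq x < e ^+ 2).
Proof.
move=> e0; rewrite /enorm -[X in _ < X](ger0_norm (ltW e0)) -sqrtr_sqr.
by rewrite ltr_sqrt // exprn_gt0.
Qed.

Lemma Sq_box N (x : 'cV[R]_N) t : (forall i, `|x i 0| <= t) -> Sq x <= N%:R * t ^+ 2.
Proof.
move=> H; rewrite /Sq.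
have -> : N%:R * t ^+ 2 = \sum_(i < N) t ^+ 2 by rewrite sumr_const card_ord mulr_natl.
apply: ler_sum => i _.
have := H i; have := normr_ge0 (x i 0).
rewrite -(real_normK (num_real (x i 0))); set y := `|x i 0|; move=> y0 yt; nra.
Qed.

Lemma small N (eps : R) : 0 < eps ->
  0 < eps / (N%:R + 1) /\ (N%:R : R) * (eps / (N%:R + 1)) ^+ 2 < eps ^+ 2.
Proof.
move=> e0.
have N0 : (0 : R) <= N%:R by exact: ler0n.
have N1 : (0 : R) < N%:R + 1 by lra.
set e' := eps / (N%:R + 1).
have e'0 : 0 < e' by rewrite divr_gt0.
have ee : eps = e' * (N%:R + 1) by rewrite /e' mulfVK // gt_eqF.
split => //; rewrite ee; nra.
Qed.

Lemma sq_lt_norm (x t : R) : 0 < t -> x ^+ 2 < t ^+ 2 -> `|x| < t.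
Proof.
move=> t0; rewrite -(real_normK (num_real x)); have := normr_ge0 x.
set y := `|x|; move=> y0 H; nra.
Qed.

Lemma conv_lemma N (v : nat -> 'cV[R]_N) (vbar : 'cV[R]_N) :
  (forall eta, 0 < eta -> exists K, forall k, (K <= k)%N -> Sq (v k.+1 - v k) < eta) ->
  accumulation_point v vbar ->
  (exists2 delta : R, 0 < delta &
     forall w, accumulation_point v w -> enorm (w - vbar) < delta -> w = vbar) ->
  converges_to v vbar.
Proof.
move=> steps acc [delta d0 iso].
apply: Classical_Prop.NNPP => Hn.
have [eps0 [e00 Hfar]] : exists eps0, 0 < eps0 /\
    forall K, exists k, (K <= k)%N /\ eps0 ^+ 2 <= Sq (v k - vbar).
  apply: Classical_Prop.NNPP => H1; apply: Hn => eps e0.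
  apply: Classical_Prop.NNPP => H2; apply: H1; exists eps; split => // K.
  apply: Classical_Prop.NNPP => H3; apply: H2; exists K => k Kk.
  rewrite enorm_lt // ltNge; apply/negP => H4; apply: H3; by exists k.
have [dN0 dNs] := small N d0.
set dN := delta / (N%:R + 1) in dN0 dNs.
set eps := Num.min eps0 dN.
have ep0 : 0 < eps by rewrite lt_min e00 dN0.
have epe : eps <= eps0 by rewrite ge_min lexx.
have epd : eps <= dN by rewrite ge_min lexx orbT.
set e2 := eps ^+ 2.
have e20 : 0 < e2 by rewrite exprn_gt0.
have [K0 HK0] := steps (e2 / 4) (divr_gt0 e20 (ltr0n _ 4)).
have CL : forall K, exists k, (K <= k)%N /\
    (e2 / 4 <= Sq (v k - vbar) /\ Sq (v k - vbar) < e2).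
  move=> K.
  have [k1 Kk1 Hk1] := acc (eps / 2) (divr_gt0 ep0 (ltr0n _ 2)) (maxn K K0).
  rewrite enorm_lt ?divr_gt0 // in Hk1.
  have Hk1' : Sq (v k1 - vbar) < e2 / 4.
    have E : (eps / 2) ^+ 2 = e2 / 4 by rewrite /e2; field.
    by rewrite -E.
  have [k2 [k12 Hk2]] := Hfar k1.
  have e2e0 : e2 <= eps0 ^+ 2 by rewrite /e2 lerXn2r // ?nnegrE ltW.
  have lt12 : (k1 < k2)%N.
    rewrite ltn_neqAle k12 andbT; apply/negP => /eqP E; rewrite -E in Hk2; lra.
  pose P j := (k1 < j)%N && (e2 / 4 <= Sq (v j - vbar)).
  have exP : exists j, P j by exists k2; rewrite /P lt12 /=; lra.
  case: (ex_minnP exP) => j /andP[k1j Hj] minj.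
  destruct j as [|j']; first by [].
  have Hprev : Sq (v j' - vbar) < e2 / 4.
    case: (eqVneq j' k1) => [->//|ne].
    rewrite ltNge; apply/negP => Hc.
    have : P j' by rewrite /P Hc andbT ltn_neqAle eq_sym ne -ltnS.
    by move/minj; rewrite ltnn.
  have Kj' : (K0 <= j')%N.
    by apply: leq_trans (leq_maxr K K0) _; rewrite -ltnS (leq_ltn_trans Kk1).
  have Hs := HK0 j' Kj'.
  exists j'.+1; split; first by apply: leq_trans (leq_maxl K K0) _; apply: leq_trans Kk1 (ltnW k1j).
  split => //.
  have -> : v j'.+1 - vbar = (v j' - vbar) + (v j'.+1 - v j') by rewrite [RHS]addrC addrA subrK.
  apply: le_lt_trans (Sq_add _ _) _; lra.
have [phi Hphi] := choice CL.
pose w k := v (phi k).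
have Hw : forall k i, `|w k i 0 - vbar i 0| <= eps.
  move=> k i; have [_ [_ H]] := Hphi k.
  have H2 := Sq_le (w k - vbar) i.
  have E : (w k - vbar) i 0 = w k i 0 - vbar i 0 by rewrite !mxE.
  rewrite E in H2.
  by apply: ltW; apply: sq_lt_norm => //; apply: le_lt_trans H2 H.
have [z [Hz Hacc]] := BW ep0 Hw.
have accz : accumulation_point v z.
  move=> e e0 K.
  have [e'0 e's] := small N e0.
  have [k Kk Hk] := Hacc _ e'0 K.
  exists (phi k); first by have [H _] := Hphi k; exact: leq_trans Kk H.
  rewrite enorm_lt //; apply: le_lt_trans e's.
  by apply: Sq_box => i; rewrite !mxE; apply: ltW; exact: Hk.
have zd : enorm (z - vbar) < delta.
  rewrite enorm_lt //; apply: le_lt_trans dNs.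
  by apply: Sq_box => i; rewrite !mxE; apply: le_trans (Hz i) epd.
have zv := iso z accz zd.
have e2h0 : 0 < eps / 2 by rewrite divr_gt0.
have [e'0 e's] := small N e2h0.
have [k _ Hk] := Hacc _ e'0 0%N.
have [_ [H _]] := Hphi k.
have : Sq (w k - vbar) <= N%:R * (eps / 2 / (N%:R + 1)) ^+ 2.
  by apply: Sq_box => i; rewrite !mxE -zv; apply: ltW; exact: Hk.
have E : (eps / 2) ^+ 2 = e2 / 4 by rewrite /e2; field.
move: e's; rewrite E => e's Hc.
rewrite /w in Hc; lra.
Qed.

End FIN.

Theorem mainTheorem2 (R : realType) (d : nat) (m : 'I_d -> nat) (N : nat)
  (L : nat) (n : 'I_L -> nat)
  (U : params R n -> 'cV[R]_N) (A : 'M[R]_N) (b : 'cV[R]_N) (p1 : params R n)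
  (vbar : 'cV[R]_N) :
  (1 <= d)%N -> (forall nu, (0 < m nu)%N) -> N = (\prod_(nu < d) m nu)%N ->
  (d <= L)%N ->
  symmetric_pd A -> b != 0 -> multilinear U ->
  (* the ALS parameter sequence is bounded (in the product Euclidean norm) *)
  (exists M : R, forall k : nat,
     \sum_(mu < L) enorm (als_seq U A b p1 k mu) ^+ 2 <= M) ->
  accumulation_point (fun k => U (als_seq U A b p1 k)) vbar ->
  (exists2 delta : R, 0 < delta &
     forall w : 'cV[R]_N, accumulation_point (fun k => U (als_seq U A b p1 k)) w ->
       enorm (w - vbar) < delta -> w = vbar) ->
  converges_to (fun k => U (als_seq U A b p1 k)) vbar.
Proof.
move=> _ _ _ _ sA _ mlU _ acc iso.
apply: conv_lemma => // eta eta0.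
pose h k := hE A b (U (als_seq U A b p1 k)).
set C := (4 : R) ^+ size (enum 'I_L) * Kc A.
have C0 : 0 < C by rewrite /C mulr_gt0 ?exprn_gt0 ?Kc_gt0.
have SW : forall k, h k.+1 <= h k /\
    Sq (U (als_seq U A b p1 k.+1) - U (als_seq U A b p1 k)) <= C * (h k - h k.+1).
  move=> k; rewrite /h /als_seq iterS; exact: (sweep_lemma mlU b sA (enum 'I_L)).
have [K HK] := decay (fun k => (SW k).1) (fun k => hE_ge0 b sA _) (divr_gt0 eta0 C0).
exists K => k Kk.
have [_ H] := SW k; apply: le_lt_trans H _.
by rewrite -ltr_pdivlMl // mulrC; exact: HK.
Qed.
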